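(* Let $p$ be a prime and let $\theta\in\mathbb{F}_p((X^{-1}))$ be a counterexample to the $X$-adic Littlewood conjecture over $\mathbb{F}_p$ with finite deficiency $D(\theta)\in\mathbb{N}_0$, i.e. for every $r\ge0$ all partial quotients $A^{(r)}_j$ of the simple continued fraction expansion of $\langle X^r\theta\rangle$ satisfy $\deg(A^{(r)}_j)\le D(\theta)+1$. Then for every $m>D(\theta)$ the digital $(D(\theta),m,3)$-net $(\boldsymbol{x}_n)_{0\le n<p^m}$ over $\mathbb{F}_p$ generated by $I^{(m)}$, $H^{(m)}(\theta)$ and $J^{(m)}$ is $(D(\theta)+3)$-admissible, i.e. $$\min_{0\le k<n<p^m}\|\boldsymbol{x}_k\ominus\boldsymbol{x}_n\|_p>p^{-m-D(\theta)-3}.$$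
   Context: $\mathbb{F}_p((X^{-1}))$ is the field of formal Laurent series $\theta=\sum_{i=j}^\infty a_iX^{-i}$ over $\mathbb{F}_p$, with $|\theta|=2^{-j}$ for $a_j\ne0$, fractional part $\langle\theta\rangle=\sum_{i\ge\max\{1,j\}}a_iX^{-i}$, $\|\theta\|=|\langle\theta\rangle|$; $\theta$ is a counterexample to the $X$-adic Littlewood conjecture if $\inf_{r\ge0,Q\in\mathbb{F}_p[X]\setminus\{0\}}|Q|\cdot\|X^rQ\theta\|>0$. Matrices (rows indexed by $1,2,\dots$, columns by $0,\dots,m-1$): $I^{(m)}$ has entry $1$ in row $k$, column $k-1$, else $0$; $H^{(m)}(\theta)$ has entry $a_{k+l}$ in row $k$, column $l$ (with $a_i=0$ for $1\le i<j$); $J^{(m)}$ has entry $1$ in row $k$, column $m-k$ for $1\le k\le m$, else $0$. Point set: for $0\le n<p^m$ with base-$p$ digit vector $\vec n=(n_0,\dots,n_{m-1})^T$, $C_i\vec n=(y^{(i)}_1,y^{(i)}_2,\dots)^T$ mod $p$ ($C_1=I^{(m)},C_2=H^{(m)}(\theta),C_3=J^{(m)}$), $x^{(i)}_n=\sum_k y^{(i)}_kp^{-k}$, $\boldsymbol{x}_n=(x^{(1)}_n,x^{(2)}_n,x^{(3)}_n)$. For $\boldsymbol{x}=(x^{(1)},x^{(2)},x^{(3)})$ with digit expansions $x^{(i)}=\sum_{j\ge1}x^{(i)}_jp^{-j}$, $\|\boldsymbol{x}\|_p=p^{-l}$ with $l=\sum_{i=1}^3\min\{j\in\mathbb{N}:x^{(i)}_j\neq0\}$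 (minimum of the empty set being $\infty$, so $\|\boldsymbol{x}\|_p=0$ if some coordinate is $0$). $\ominus$ is componentwise digit-wise subtraction modulo $p$: $x^{(i)}_k\ominus x^{(i)}_n=\sum_{j\ge1}\big((x^{(i)}_{k,j}-x^{(i)}_{n,j})\bmod p\big)p^{-j}$. *)

(* Defs.v *)
From mathcomp Require Import all_boot all_order all_algebra.
From Stdlib Require Import ClassicalEpsilon.
Set Implicit Arguments. Unset Strict Implicit. Unset Printing Implicit Defensive.
Import Order.TTheory GRing.Theory Num.Theory.
Local Open Scope ring_scope.

Definition first_nz (T : nmodType) (a : nat -> T) : option nat :=
  match excluded_middle_informative (exists n, a n != 0) with
  | left h => Some (@ex_minn (fun n => a n != 0) h)
  | right _ => None
  end.

(* ---------- Laurent series in X^{-1} over 'F_p ----------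
   A fractional part  sum_{i>=1} a_i X^{-i}  is represented by f : nat -> 'F_p
   with f i = a_{i+1}  (coefficient of X^{-(i+1)}).  *)

Definition frac_abs (p : nat) (g : nat -> 'F_p) : rat :=
  match first_nz g with
  | Some v => ((2 ^ v.+1)%N%:R)^-1
  | None => 0
  end.

(* fractional part of X^r Q theta, where f is the fractional part of theta:
   coefficient of X^{-(i+1)} is sum_d Q_d a_{i+1+r+d} *)
Definition frac_XrQ (p : nat) (f : nat -> 'F_p) (r : nat) (Q : {poly 'F_p}) : nat -> 'F_p :=
  fun i => \sum_(d < size Q) Q`_d * f (i + r + d)%N.

Definition poly_abs (p : nat) (Q : {poly 'F_p}) : rat := (2 ^ (size Q).-1)%N%:R.

Definition XadicLC_counterexample (p : nat) (f : nat -> 'F_p) : Prop :=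
  exists c : rat, 0 < c /\
    forall (r : nat) (Q : {poly 'F_p}), Q != 0 ->
      c <= poly_abs Q * frac_abs (frac_XrQ f r Q).

(* inv_step al A al' : for the (nonzero) fractional series al, the Laurent series
   A + al' (A polynomial part, al' fractional part) is the inverse of al,
   i.e. al * (A + al') = 1 coefficientwise:
   - coefficient of X^n (n >= 0):        sum_d A_d al_{d-n-1}                 = [n = 0]
   - coefficient of X^{-(s+1)} (s >= 0): sum_d A_d al_{d+s} + sum_{i+j=s-1} al_i al'_j = 0 *)
Definition inv_step (p : nat) (al : nat -> 'F_p) (A : {poly 'F_p}) (al' : nat -> 'F_p)
  : Prop :=
  (forall n : nat,
      \sum_(d < size A | (n < d)%N) A`_d * al (d - n.+1)%N = (n == 0%N)%:R) /\
  (forall s : nat,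
      \sum_(d < size A) A`_d * al (d + s)%N
      + \sum_(i < s) al i * al' (s.-1 - i)%N = 0).

(* Continued fraction algorithm started at al0 (|al0| < 1):
   alpha_0 = al0, and while alpha_j <> 0:
   A_{j+1} = [1/alpha_j] (polynomial part), alpha_{j+1} = <1/alpha_j>. *)
Definition cf_expansion (p : nat) (al0 : nat -> 'F_p)
  (al : nat -> nat -> 'F_p) (A : nat -> {poly 'F_p}) : Prop :=
  (forall i, al 0%N i = al0 i) /\
  forall j, (exists i, al j i != 0) -> inv_step (al j) (A j.+1) (al j.+1).

(* Finite deficiency bound D: for every r >= 0, every partial quotient A_j (j >= 1)
   of the continued fraction expansion of <X^r theta> has degree <= D + 1.
   <X^r theta> has fractional coefficients i |-> f (i + r). *)
Definition deficiency_bound (p : nat) (f : nat -> 'F_p) (D : nat) : Prop :=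
  forall (r : nat) (al : nat -> nat -> 'F_p) (A : nat -> {poly 'F_p}),
    cf_expansion (fun i => f (i + r)%N) al A ->
    forall j : nat, (forall i, (i <= j)%N -> exists t, al i t != 0) ->
      ((size (A j.+1)).-1 <= D.+1)%N.

(* ---------- the digital net ----------
   Generating matrices: rows indexed by k = 1,2,... (row 0 unused, set to 0),
   columns by 'I_m. *)
Definition Imat (p m : nat) : nat -> 'I_m -> 'F_p :=
  fun k l => ((k == (val l).+1) : nat)%:R.
(* H^{(m)}(theta): entry a_{k+l} = f (k - 1 + l) in row k >= 1, column l *)
Definition Hmat (p m : nat) (f : nat -> 'F_p) : nat -> 'I_m -> 'F_p :=
  fun k l => if k is k'.+1 then f (k' + val l)%N else 0.
Definition Jmat (p m : nat) : nat -> 'I_m -> 'F_p :=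
  fun k l => (((0 < k <= m)%N && (val l == m - k)%N) : nat)%:R.

Definition ndigit (p n l : nat) : 'F_p := ((n %/ p ^ l) %% p)%N%:R.

(* digits y_1, y_2, ... (index k >= 1) of x_n = sum_k y_k p^{-k}, (y_k) = C n mod p *)
Definition net_digits (p m : nat) (C : nat -> 'I_m -> 'F_p) (n : nat) : nat -> 'F_p :=
  fun k => \sum_(l < m) C k l * ndigit p n l.

Definition dsub (p : nat) (x y : nat -> 'F_p) : nat -> 'F_p := fun k => x k - y k.

Definition dmin (p : nat) (x : nat -> 'F_p) : option nat :=
  omap S (first_nz (fun j => x j.+1)).

Definition pnorm3 (p : nat) (x1 x2 x3 : nat -> 'F_p) : rat :=
  match dmin x1, dmin x2, dmin x3 with
  | Some l1, Some l2, Some l3 => ((p ^ (l1 + l2 + l3))%N%:R)^-1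
  | _, _, _ => 0
  end.

Definition net_dist (p m : nat) (f : nat -> 'F_p) (k n : nat) : rat :=
  pnorm3 (dsub (net_digits (@Imat p m) k) (net_digits (@Imat p m) n))
         (dsub (net_digits (@Hmat p m f) k) (net_digits (@Hmat p m f) n))
         (dsub (net_digits (@Jmat p m) k) (net_digits (@Jmat p m) n)).

(* Main.v *)
Require Import Defs.
From mathcomp Require Import all_boot all_order all_algebra.
From mathcomp Require Import zify.
From Stdlib Require Import ClassicalEpsilon Classical.
Import Order.TTheory GRing.Theory Num.Theory.
Local Open Scope ring_scope.

Set Implicit Arguments. Unset Strict Implicit. Unset Printing Implicit Defensive.

Section Generic.
Variable F : fieldType.
Implicit Types (a b : nat -> F).

Lemma first_nzP a v : first_nz a = Some v -> a v != 0 /\ (forall i, (i < v)%N -> a i = 0).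
Proof.
rewrite /first_nz; case: excluded_middle_informative => // h [<-].
case: ex_minnP => n an hmin; split => // i iv.
by apply/eqP; apply: contraTT iv => /hmin; rewrite -leqNgt.
Qed.

Lemma first_nzN a : first_nz a = None -> forall i, a i = 0.
Proof.
rewrite /first_nz; case: excluded_middle_informative => // h _ i.
by apply/eqP; apply: contra_notT h => hi; exists i.
Qed.

Lemma first_nzE a v : a v != 0 -> (forall i, (i < v)%N -> a i = 0) -> first_nz a = Some v.
Proof.
move=> av hv; rewrite /first_nz; case: excluded_middle_informative => h; last first.
  by case: h; exists v.
congr Some; case: ex_minnP => n an hmin.
apply/eqP; rewrite eqn_leq hmin // leqNgt; apply/negP => /hv/eqP.
by rewrite (negbTE an).
Qed.

Fixpoint binvs (u : nat -> F) (n : nat) : seq F :=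
  if n is n'.+1 then
    let s := binvs u n' in
    rcons s (if n' is 0 then (u 0%N)^-1
             else - (u 0%N)^-1 * \sum_(i < n') u i.+1 * nth 0 s (n' - i.+1))
  else [::].

Definition binv u n := nth 0 (binvs u n.+1) n.

Lemma size_binvs u n : size (binvs u n) = n.
Proof. by elim: n => //= n IH; rewrite size_rcons IH. Qed.

Lemma nth_binvs u n i : (i < n)%N -> nth 0 (binvs u n) i = binv u i.
Proof.
elim: n => // n IH; rewrite ltnS leq_eqVlt => /orP [/eqP -> //| lt].
by rewrite /= nth_rcons size_binvs lt IH.
Qed.

Lemma binv0 u : binv u 0 = (u 0%N)^-1.
Proof. by []. Qed.

Lemma binvS u n : binv u n.+1 = - (u 0%N)^-1 * \sum_(i < n.+1) u i.+1 * binv u (n - i).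
Proof.
rewrite /binv; have -> : binvs u n.+2 = rcons (binvs u n.+1)
  (- (u 0%N)^-1 * \sum_(i < n.+1) u i.+1 * nth 0 (binvs u n.+1) (n.+1 - i.+1)) by [].
rewrite nth_rcons size_binvs ltnn eqxx; congr (_ * _).
by apply: eq_bigr => i _; rewrite nth_binvs // subSS; have := ltn_ord i; lia.
Qed.

Lemma binvP u n : u 0%N != 0 ->
  \sum_(i < n.+1) u i * binv u (n - i) = (n == 0%N)%:R.
Proof.
move=> u0; case: n => [|n]; first by rewrite big_ord1 subn0 binv0 divff.
rewrite big_ord_recl /= subn0 binvS mulrA mulrN mulfV // mulN1r.
rewrite [X in _ + X](eq_bigr (fun i : 'I_n.+1 => u i.+1 * binv u (n - i))).
  by rewrite addNr.
by move=> i _; rewrite /bump /= add1n subSS.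
Qed.

End Generic.


Section Generic2.
Variable p : nat. Local Notation F := ('F_p : fieldType).
Implicit Types (a b : nat -> F).

Lemma sum_split (G : nat -> F) M N K : M = (N + K)%N ->
  \sum_(i < M) G i = \sum_(i < N) G i + \sum_(i < K) G (N + i)%N.
Proof. by move->; rewrite big_split_ord. Qed.

Lemma sum_split_cond (G : nat -> F) n M : (n < M)%N ->
  \sum_(i < M | (n < i)%N) G i = \sum_(i < M - n.+1) G (n.+1 + i)%N.
Proof.
move=> nM; rewrite big_mkcond (@sum_split (fun i => if (n < i)%N then G i else 0) M n.+1 (M - n.+1)); last by lia.
rewrite big1 ?add0r; last by move=> i _; rewrite ltnNge -ltnS ltn_ord.
by apply: eq_bigr => i _; rewrite leq_addr.
Qed.

Definition ordz a := odflt 0%N (first_nz a).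
Definition ua a i := a (ordz a + i)%N.
Definition Ba a := binv (ua a).
Definition Apoly a : {poly F} := \poly_(d < (ordz a).+2) Ba a ((ordz a).+1 - d).
Definition nxt a := fun j => Ba a ((ordz a).+2 + j)%N.

Definition nonzero a := exists i, a i != 0.

Lemma ordzP a : nonzero a -> first_nz a = Some (ordz a).
Proof.
move=> [i ai]; rewrite /ordz; case E: (first_nz a) => [v|] //.
by move: (first_nzN E i) ai => ->; rewrite eqxx.
Qed.

Lemma ordz_nz a : nonzero a -> a (ordz a) != 0.
Proof. by move/ordzP/first_nzP => []. Qed.

Lemma ordz_lt a i : nonzero a -> (i < ordz a)%N -> a i = 0.
Proof. by move/ordzP/first_nzP => [] _; apply. Qed.

Lemma ua0 a : nonzero a -> ua a 0 != 0.
Proof. by move=> h; rewrite /ua addn0 ordz_nz. Qed.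

Lemma Ba0 a : nonzero a -> Ba a 0 != 0.
Proof. by move=> h; rewrite /Ba binv0 invr_neq0 // ua0. Qed.

Lemma size_Apoly a : nonzero a -> size (Apoly a) = (ordz a).+2.
Proof. by move=> h; rewrite size_poly_eq //= subnn Ba0. Qed.

Lemma conv_alpha a M : nonzero a ->
  \sum_(i < M.+1) a i * Ba a (M - i) = (M == ordz a)%:R.
Proof.
move=> h; set v := ordz a.
case: (ltnP M v) => Mv.
  rewrite big1; last by move=> i _; rewrite ordz_lt ?mul0r //; have := ltn_ord i; lia.
  by rewrite (ltn_eqF Mv).
rewrite (@sum_split (fun i => a i * Ba a (M - i)) M.+1 v (M - v).+1); last by lia.
rewrite big1 ?add0r; last by move=> i _; rewrite ordz_lt ?mul0r.
have -> : (M == v) = (M - v == 0)%N by lia.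
rewrite -(binvP (M - v) (ua0 h)); apply: eq_bigr => i _.
by rewrite /ua /Ba; congr (_ * binv _ _); have := ltn_ord i; lia.
Qed.

Lemma inv_step_nxt a : nonzero a -> inv_step a (Apoly a) (nxt a).
Proof.
move=> h; rewrite /inv_step size_Apoly //; set v := ordz a; split.
  move=> n; case: (ltnP v n) => vn.
    rewrite big_pred0; first by rewrite (gtn_eqF (leq_ltn_trans (leq0n _) vn)).
    by move=> i /=; apply/negbTE; rewrite -leqNgt; have := ltn_ord i; lia.
  rewrite (@sum_split_cond (fun d => (Apoly a)`_d * a (d - n.+1)%N)); last by lia.
  have -> : (n == 0%N) = (v - n == v)%N by lia.
  rewrite -conv_alpha //; rewrite (_ : (v.+2 - n.+1) = (v - n).+1)%N; last by lia.
  apply: eq_bigr => i _; rewrite coef_poly mulrC.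
  have := ltn_ord i => iv.
  rewrite (_ : (n.+1 + i < v.+2)%N = true); last by lia.
  by rewrite /v; congr (a _ * Ba a _); lia.
move=> s.
have := conv_alpha (s + v).+1 h; rewrite (_ : ((s + v).+1 == v) = false); last by lia.
rewrite (@sum_split (fun i => a i * Ba a ((s+v).+1 - i)) (s + v).+2 s v.+2); last by lia.
rewrite mulr0n => H; apply: (etrans _ H); rewrite addrC; congr (_ + _).
  apply: eq_bigr => i _; rewrite /nxt; congr (_ * Ba a _); have := ltn_ord i; lia.
apply: eq_bigr => i _; rewrite coef_poly ltn_ord mulrC; congr (_ * _).
  by rewrite addnC.
by congr (Ba a _); have := ltn_ord i; lia.
Qed.

End Generic2.


Section Generic3.
Variable p : nat. Local Notation F := ('F_p : fieldType).
Implicit Types (a b : nat -> F).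

Definition fr (Q : {poly F}) a := fun s => \sum_(d < size Q) Q`_d * a (s + d)%N.
Definition pp (Q : {poly F}) a : {poly F} :=
  \poly_(n < size Q) \sum_(d < size Q | (n < d)%N) Q`_d * a (d - n.+1)%N.

Lemma fr_widen (Q : {poly F}) a s N : (size Q <= N)%N -> fr Q a s = \sum_(d < N) Q`_d * a (s + d)%N.
Proof.
move=> hN; rewrite /fr (big_ord_widen N (fun d => Q`_d * a (s + d)%N)) // big_mkcond.
apply: eq_bigr => i _; case: ifP => // /negbT; rewrite -leqNgt => hi.
by rewrite nth_default // mul0r.
Qed.

Lemma key_d a d T : nonzero a -> (ordz a < T)%N ->
  \sum_(n < d) a (d - n.+1)%N * Ba a (T.+1 + n)%N + \sum_(t < T.+1) a (t + d)%N * Ba a (T - t)%N = 0.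
Proof.
move=> h vT; have := conv_alpha (d + T) h.
rewrite (_ : (d + T == ordz a) = false); last by lia.
rewrite (@sum_split _ (fun i => a i * Ba a (d + T - i)) (d + T).+1 d T.+1); last by lia.
rewrite mulr0n => H; apply: (etrans _ H); congr (_ + _).
  rewrite (reindex_inj rev_ord_inj) /=; apply: eq_bigr => i _.
  have := ltn_ord i; move=> hi; congr (a _ * Ba a _); lia.
by apply: eq_bigr => i _; rewrite addnC; congr (_ * Ba a _); lia.
Qed.

Lemma key (Q : {poly F}) a s : nonzero a ->
  fr (pp Q a) (nxt a) s = - \sum_(t < (s + ordz a).+2) fr Q a t * Ba a ((s + ordz a).+1 - t).
Proof.
move=> h; set v := ordz a; set N := size Q; set T := (s + v).+1.
rewrite (@fr_widen (pp Q a) _ _ N); last by rewrite /pp size_poly.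
under eq_bigr => n _ do rewrite coef_poly ltn_ord mulr_suml.
rewrite (exchange_big_dep xpredT) //=.
rewrite /fr; under [in RHS]eq_bigr => t _ do rewrite mulr_suml.
rewrite [in RHS]exchange_big /= -sumrN; apply: eq_bigr => d _.
have key1 := key_d d h (_ : (v < T)%N).
rewrite -(big_ord_widen N (fun n => Q`_d * a (d - n.+1)%N * nxt a (s + n)%N)); last exact: ltnW.
have E : \sum_(n < d) a (d - n.+1)%N * nxt a (s + n)%N = \sum_(n < d) a (d - n.+1)%N * Ba a (T.+1 + n)%N.
  by apply: eq_bigr => n _; rewrite /nxt; congr (_ * Ba a _); rewrite /T /v; lia.
rewrite -!(eq_bigr _ (fun i _ => mulrA _ _ _)) -!mulr_sumr E -mulrN; congr (_ * _).
by apply/eqP; rewrite -addr_eq0 key1 // /T; lia.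
Qed.
End Generic3.


Section Generic4.
Variable p : nat. Local Notation F := ('F_p : fieldType).
Implicit Types (a b : nat -> F).

Lemma fr_nonzero (Q : {poly F}) b s : fr Q b s != 0 -> nonzero b.
Proof.
move=> H; case: (classic (nonzero b)) => // nb; move: H; rewrite /fr big1 ?eqxx // => i _.
suff -> : b (s + i)%N = 0 by rewrite mulr0.
by case: (eqVneq (b (s + i)%N) 0) => // hb; case: nb; exists (s + i)%N.
Qed.

Lemma fr_size0 (Q : {poly F}) b s : fr Q b s != 0 -> (0 < size Q)%N.
Proof.
rewrite lt0n; apply: contra => /eqP h; rewrite /fr.
by apply/eqP; apply: big1 => -[i hi] _; move: hi; rewrite h.

Qed.

Lemma main_ind (al : nat -> nat -> F) D :
  (forall j, al j.+1 = nxt (al j)) ->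
  (forall j, (forall i, (i <= j)%N -> nonzero (al i)) -> (ordz (al j) <= D)%N) ->
  forall N (Q : {poly F}) j w, (size Q <= N)%N ->
  (forall i, (i <= j)%N -> nonzero (al i)) ->
  first_nz (fr Q (al j)) = Some w -> (w <= (size Q).-1 + D)%N.
Proof.
move=> Hst Hdef; elim=> [|N IH] Q j w hs hnz hw.
  have [+ _] := first_nzP hw => /fr_size0; lia.
have hv := Hdef j hnz; have hna := hnz j (leqnn j).
set a := al j in hw hv hna; set v := ordz a in hv.
have [ew elt] := first_nzP hw.
case: (leqP w v) => wv; first by lia.
set P := pp Q a.
have hP : first_nz (fr P (al j.+1)) = Some (w - v.+1)%N.
  apply: first_nzE => [|s sw]; rewrite Hst key //.
    rewrite oppr_eq0 big_ord_recr /= big1 ?add0r.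
      by rewrite (_ : (w - v.+1 + ordz a).+1 = w)%N ?subnn ?mulf_neq0 ?Ba0 //; rewrite /v in wv; lia.
    move=> i _; rewrite elt ?mul0r //; have := ltn_ord i; rewrite /v in wv; lia.
  rewrite big1 ?oppr0 // => i _; rewrite elt ?mul0r //.
  by have := ltn_ord i; rewrite /v in wv sw; lia.
have [eP _] := first_nzP hP.
have nz1 := fr_nonzero eP; have sP0 := fr_size0 eP.
have sPQ : (size P <= size Q - v.+1)%N.
  apply/leq_sizeP => n hn; rewrite coef_poly; case: ifP => // nQ.
  rewrite big1 // => d hd; rewrite (@ordz_lt _ a (d - n.+1)%N) ?mulr0 //.
  by have := ltn_ord d; rewrite /v in hn; lia.
have hsP : (size P <= N)%N by rewrite /v in sPQ wv; lia.
have hnz' : forall i, (i <= j.+1)%N -> nonzero (al i).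
  by move=> i; rewrite leq_eqVlt => /orP [/eqP -> // | ]; rewrite ltnS; exact: hnz.
have := IH P j.+1 _ hsP hnz' hP.
rewrite /v in sPQ wv hv |- *; lia.
Qed.
End Generic4.


Section Final.
Variable p : nat. Local Notation F := ('F_p : fieldType).
Variable f : nat -> F.

Fixpoint alf (r j : nat) : nat -> F :=
  if j is j'.+1 then nxt (alf r j') else fun i => f (i + r)%N.
Definition Aseq (r j : nat) : {poly F} := if j is j'.+1 then Apoly (alf r j') else 0.

Lemma cf_alf r : cf_expansion (fun i => f (i + r)%N) (alf r) (Aseq r).
Proof. by split => // j hj; apply: inv_step_nxt. Qed.

Lemma bound_fr D : deficiency_bound f D -> forall r (Q : {poly F}) w,
  first_nz (fr Q (fun i => f (i + r)%N)) = Some w -> (w <= (size Q).-1 + D)%N.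
Proof.
move=> hD r Q w hw.
apply: (@main_ind p (alf r) D _ _ (size Q) Q 0 w) => //.
- move=> j hj; have := hD r _ _ (cf_alf r) j hj.
  by rewrite /= size_Apoly //; exact: hj.
- move=> i; rewrite leqn0 => /eqP ->; have [+ _] := first_nzP hw.
  exact: fr_nonzero.
Qed.

Lemma first_nz0 (a : nat -> F) : (forall i, a i = 0) -> first_nz a = None.
Proof.
move=> h; case E: (first_nz a) => [v|] //; have [+ _] := first_nzP E.
by rewrite h eqxx.
Qed.

End Final.


Lemma digits_eq (p : nat) : (1 < p)%N -> forall n x y, (x + y < n)%N ->
  (forall l, (x %/ p ^ l) %% p = (y %/ p ^ l) %% p)%N -> x = y.
Proof.
move=> p1; elim=> // n IH x y hn h.
have h0 := h 0%N; rewrite expn0 !divn1 in h0.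
have [[-> ->] // | xy0] : (x = 0 /\ y = 0)%N \/ (0 < x + y)%N by lia.
have hq : (x %/ p = y %/ p)%N.
  apply: IH; last by move=> l; rewrite -!divnMA -expnS h.
  have := leq_div x p; have := leq_div y p.
  case: (posnP x) => x0; case: (posnP y) => y0.
  - by lia.
  - by have := ltn_Pdiv p1 y0; lia.
  - by have := ltn_Pdiv p1 x0; lia.
  - by have := ltn_Pdiv p1 x0; have := ltn_Pdiv p1 y0; lia.
by rewrite (divn_eq x p) (divn_eq y p) hq h0.
Qed.

Lemma digit_big (p m x l : nat) : (1 < p)%N -> (x < p ^ m)%N -> (m <= l)%N -> (x %/ p ^ l = 0)%N.
Proof.
move=> p1 xm ml; apply: divn_small; apply: leq_trans xm _.
by rewrite leq_exp2l.
Qed.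

Lemma ndigit_inj p x y l : prime p -> ndigit p x l = ndigit p y l ->
  ((x %/ p ^ l) %% p = (y %/ p ^ l) %% p)%N.
Proof.
move=> pp /(congr1 (fun z : 'F_p => (z : nat))); rewrite /ndigit.
by rewrite !val_Fp_nat // !modn_mod.
Qed.

Lemma sum_delta (R : nzRingType) m j (g : nat -> R) :
  \sum_(l < m) ((val l == j) : nat)%:R * g (val l) = if (j < m)%N then g j else 0.
Proof.
case: ltnP => h.
  rewrite (bigD1 (Ordinal h)) //= eqxx mul1r big1 ?addr0 // => i ne.
  rewrite (_ : (val i == j) = false) ?mul0r //; apply/negbTE; apply: contra ne => /eqP e.
  by apply/eqP; apply: val_inj.
rewrite big1 // => i _; rewrite (_ : (val i == j) = false) ?mul0r //.
by apply/negbTE; rewrite neq_ltn (leq_trans (ltn_ord i) h).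
Qed.

Unset Implicit Arguments. Set Strict Implicit.

Theorem lemma6 (p : nat) (f : nat -> 'F_p) (D : nat) :
  prime p ->
  XadicLC_counterexample f ->
  deficiency_bound f D ->
  forall m : nat, (D < m)%N ->
  forall k n : nat, (k < n)%N -> (n < p ^ m)%N ->
    ((p ^ (m + D + 3))%N%:R)^-1 < net_dist m f k n.
Proof.
move=> pp hLC hD m Dm k n kn nm.
have p1 := prime_gt1 pp.
have km : (k < p ^ m)%N by lia.
pose c := fun l => ndigit p k l - ndigit p n l.
have cbig : forall l, (m <= l)%N -> c l = 0.
  by move=> l hl; rewrite /c /ndigit !(digit_big p1 _ hl) // subrr.
have cnz : nonzero c.
  case: (classic (nonzero c)) => // nc; exfalso.
  suff : k = n by lia.
  apply: (@digits_eq p p1 (k + n).+1 k n) => // l; apply: (@ndigit_inj p k n l pp).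
  apply/eqP; rewrite -subr_eq0; apply/eqP.
  by case: (eqVneq (c l) 0) => // hc; case: nc; exists l.
have ha := ordzP cnz; set a := ordz c in ha.
have [ca clt] := first_nzP ha.
have am : (a < m)%N.
  by rewrite ltnNge; apply/negP => /cbig; apply/eqP.
pose Q : {poly 'F_p} := \poly_(i < m - a) c (a + i)%N.
have cQ : forall i, c (a + i)%N = Q`_i.
  move=> i; rewrite coef_poly; case: ifP => // /negbT; rewrite -leqNgt => h.
  by rewrite cbig //; lia.
have Q0 : Q != 0.
  by apply/eqP => Qe; move: ca; have := cQ 0%N; rewrite addn0 Qe coef0 => ->; rewrite eqxx.
have sQ : (0 < size Q)%N by rewrite size_poly_gt0.
pose b := (a + (size Q).-1)%N.
have cb : c b != 0 by rewrite /b cQ -lead_coefE lead_coef_eq0.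
have cgt : forall l, (b < l)%N -> c l = 0.
  move=> l hl; rewrite (_ : l = a + (l - a))%N; last by rewrite /b in hl; lia.
  rewrite cQ nth_default //; rewrite /b in hl. move: sQ hl. set s := size Q. lia.
have bm : (b < m)%N.
  by rewrite ltnNge; apply/negP => /cbig; apply/eqP.
have sQm : (size Q <= m - a)%N by apply: size_poly.
clearbody Q.
have hx1 : forall j, dsub (net_digits (@Imat p m) k) (net_digits (@Imat p m) n) j.+1 = c j.
  move=> j; rewrite /dsub /net_digits /Imat /=.
  rewrite (eq_bigr (fun l : 'I_m => ((val l == j) : nat)%:R * ndigit p k (val l))); last first.
    by move=> l _; rewrite eqSS eq_sym.
  rewrite [X in _ - X](eq_bigr (fun l : 'I_m => ((val l == j) : nat)%:R * ndigit p n (val l))); last first.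
    by move=> l _; rewrite eqSS eq_sym.
  rewrite !sum_delta; case: ltnP => // h; by rewrite cbig // subrr.
have hx3 : forall j, dsub (net_digits (@Jmat p m) k) (net_digits (@Jmat p m) n) j.+1
    = if (j < m)%N then c (m - j.+1)%N else 0.
  move=> j; rewrite /dsub /net_digits /Jmat /=; case: ltnP => h.
    rewrite (eq_bigr (fun l : 'I_m => ((val l == (m - j.+1)%N) : nat)%:R * ndigit p k (val l))); last first.
      by [].
    rewrite [X in _ - X](eq_bigr (fun l : 'I_m => ((val l == (m - j.+1)%N) : nat)%:R * ndigit p n (val l))); last first.
      by [].
    by rewrite !sum_delta (_ : (m - j.+1 < m)%N = true) //; lia.
  by rewrite !big1 ?subrr // => l _; rewrite mul0r.
pose al := fun i => f (i + a)%N.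
have hx2 : forall j, dsub (net_digits (@Hmat p m f) k) (net_digits (@Hmat p m f) n) j.+1 = fr Q al j.
  move=> j; rewrite /dsub /net_digits /Hmat /= -sumrB.
  rewrite (eq_bigr (fun l : 'I_m => f (j + val l)%N * c (val l))); last first.
    by move=> l _; rewrite /c mulrBr.
  rewrite (@sum_split _ (fun l => f (j + l)%N * c l) m a (m - a)); last by lia.
  rewrite big1 ?add0r; last by move=> l _; rewrite clt ?mulr0.
  rewrite (@fr_widen p Q al j (m - a)%N sQm); apply: eq_bigr => i _; rewrite cQ mulrC /al.
  by congr (_ * f _); lia.
have [w hw] : exists w, first_nz (fr Q al) = Some w.
  case E: (first_nz (fr Q al)) => [w|]; first by exists w.
  exfalso; have z := first_nzN E.
  case: hLC => c0 [c0pos hc]; have := hc a Q Q0.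
  rewrite /frac_abs (@first_nz0 p (frac_XrQ f a Q)); last first.
    move=> i; rewrite -(z i) /frac_XrQ /fr; apply: eq_bigr => d _; rewrite /al.
    by rewrite addnAC.
  by rewrite mulr0 leNgt c0pos.
have wb := bound_fr hD hw.
have [ew wlt] := first_nzP hw.
have E1 : dmin (dsub (net_digits (@Imat p m) k) (net_digits (@Imat p m) n)) = Some a.+1.
  rewrite /dmin (@first_nzE _ _ a) //; first by rewrite hx1.
  by move=> i hi; rewrite hx1 clt.
have E2 : dmin (dsub (net_digits (@Hmat p m f) k) (net_digits (@Hmat p m f) n)) = Some w.+1.
  rewrite /dmin (@first_nzE _ _ w) //; first by rewrite hx2.
  by move=> i hi; rewrite hx2 wlt.
have E3 : dmin (dsub (net_digits (@Jmat p m) k) (net_digits (@Jmat p m) n)) = Some (m - b.+1).+1.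
  rewrite /dmin (@first_nzE _ _ (m - b.+1)%N) //.
    rewrite hx3 (_ : (m - b.+1 < m)%N = true); last by lia.
    by rewrite (_ : (m - (m - b.+1).+1)%N = b) //; lia.
  move=> i hi; rewrite hx3; case: ifP => // _; rewrite cgt //; lia.
rewrite /net_dist /pnorm3 E1 E2 E3.
have pos : forall e, (0 : rat) < (p ^ e)%N%:R by move=> e; rewrite ltr0n expn_gt0 prime_gt0.
rewrite ltf_pV2 ?posrE ?pos // ltr_nat ltn_exp2l //.
move: wb; rewrite /b in bm |- *; set s := size Q; move: sQ; rewrite -/s; lia.
Qed.
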